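(* Let $G$ be the graph with vertex set $\{a_i,b_i,c_i : i\in[4]\}\cup\{q_i^j,r_i^j : i\in[4], j\in[2]\}$ and edges: the three four-cycles $A$: $a_ia_{i\bmod 4+1}$, $B$: $b_ib_{i\bmod 4+1}$, $C$: $c_ic_{i\bmod 4+1}$ ($i\in[4]$); $q_i^j a_k, q_i^j b_k, q_i^j c_k$ for all $i,k\in[4]$, $j\in[2]$; $r_i^jq_i^j$; and $r_i^ja_i, r_i^ja_{i\bmod 4+1}, r_i^jb_i, r_i^jb_{i\bmod 4+1}, r_i^jc_i, r_i^jc_{i\bmod 4+1}$ for $i\in[4],j\in[2]$. Let $Q=\{q_i^j : i\in[4],j\in[2]\}$. Suppose $(A,\mathcal{D})$ is a planar geometric storyplan of $G$ (here $A(\cdot)$ denotes the visible-interval function), and let $I=\{A(q) : q\in Q\}$. Then there exists a set $I'\subset I$ with $|I'|\ge 6$ such that for every $[s,e]\in I'$ and every $t\in[s,e]$, all vertices of the three four-cycles $A$, $B$ and $C$ are visible at $t$.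
   Context: A storyplan of a graph $G$ on time steps $[\ell]$ is a pair $(A,\mathcal{D})$ where $A$ assigns to each vertex $v$ a nonempty interval $A(v)\subseteq[\ell]$ of consecutive integers ($v$ is visible at each $t\in A(v)$), adjacent vertices have intersecting intervals, and $\mathcal{D}$ assigns one fixed point to each vertex and one fixed curve to each edge. The frame at $t$ is the drawing under $\mathcal{D}$ of $G[\{v : t\in A(v)\}]$. The storyplan is planar geometric if every frame is a planar drawing with all edges straight-line segments. *)

(* Defs.v *)
From mathcomp Require Import all_boot all_order all_algebra.
Set Implicit Arguments. Unset Strict Implicit. Unset Printing Implicit Defensive.
Import Order.TTheory GRing.Theory Num.Theory.

(* Vertex set of G (0-based indices: 'I_4 stands for [4], 'I_2 for [2]).
   cyc k i : i-th vertex of the four-cycle k (k = 0,1,2 for A,B,C: a_i,b_i,c_i)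
   qv i j  : q_i^j,   rv i j : r_i^j. *)
Definition V : finType := ((('I_3 * 'I_4) + ('I_4 * 'I_2)) + ('I_4 * 'I_2))%type.
Definition cyc (k : 'I_3) (i : 'I_4) : V := inl (inl (k, i)).
Definition qv (i : 'I_4) (j : 'I_2) : V := inl (inr (i, j)).
Definition rv (i : 'I_4) (j : 'I_2) : V := inr (i, j).

(* cyclic successor: i |-> i mod 4 + 1 in 1-based indexing *)
Definition nxt (i : 'I_4) : 'I_4 := ordS i.

(* one orientation of each edge *)
Definition edge0 (x y : V) : bool :=
  match x, y with
  | inl (inl (k, i)), inl (inl (k', i')) => (k == k') && (i' == nxt i)
  | inl (inr _), inl (inl _) => true
  | inr (i, j), inl (inr (i', j')) => (i == i') && (j == j')
  | inr (i, _), inl (inl (_, i')) => (i' == i) || (i' == nxt i)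
  | _, _ => false
  end.

Definition adj (x y : V) : bool := edge0 x y || edge0 y x.

Section Geometry.
Variable R : realFieldType.
Local Open Scope ring_scope.

Definition on_seg (z p1 p2 : R * R) : Prop :=
  exists l : R, 0 <= l /\ l <= 1 /\
    z.1 = (1 - l) * p1.1 + l * p2.1 /\ z.2 = (1 - l) * p1.2 + l * p2.2.
End Geometry.

(* A : V -> nat * nat encodes the interval [(A v).1, (A v).2] *)
Definition visible (A : V -> nat * nat) (v : V) (t : nat) : bool :=
  ((A v).1 <= t <= (A v).2)%N.

Definition storyplan_intervals (l : nat) (A : V -> nat * nat) : Prop :=
  (forall v, 1 <= (A v).1 /\ (A v).1 <= (A v).2 /\ (A v).2 <= l)%N /\
  (forall u v, adj u v -> exists t, visible A u t /\ visible A v t).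

(* The frame at t, i.e. the drawing of G[{v : t in A(v)}] with vertex v at
   point p v and every edge uv drawn as the segment [p u, p v], is a planar
   straight-line drawing. *)
Definition frame_planar (R : realFieldType) (A : V -> nat * nat)
    (p : V -> R * R) (t : nat) : Prop :=
  (forall u v, visible A u t -> visible A v t -> u <> v -> p u <> p v) /\
  (forall u v w, adj u v -> visible A u t -> visible A v t -> visible A w t ->
      w <> u -> w <> v -> ~ on_seg (p w) (p u) (p v)) /\
  (forall u v w x, adj u v -> adj w x ->
      visible A u t -> visible A v t -> visible A w t -> visible A x t ->
      ~ ((u = w /\ v = x) \/ (u = x /\ v = w)) ->
      forall z, on_seg z (p u) (p v) -> on_seg z (p w) (p x) ->
        exists y, (y = u \/ y = v) /\ (y = w \/ y = x) /\ z = p y).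

(* (A, D) is a planar geometric storyplan of G on time steps [l]; D is given
   by the vertex positions p (edges are the straight segments). *)
Definition planar_geometric_storyplan (R : realFieldType) (l : nat)
    (A : V -> nat * nat) (p : V -> R * R) : Prop :=
  storyplan_intervals l A /\
  (forall t, (1 <= t <= l)%N -> frame_planar A p t).

(* Main.v *)
Require Import Defs.
From mathcomp Require Import all_boot all_order all_algebra.
From mathcomp Require Import ring lra zify.

Module GeoM.
Set Implicit Arguments. Unset Strict Implicit. Unset Printing Implicit Defensive.
Import Order.TTheory GRing.Theory Num.Theory.
Local Open Scope ring_scope.
Section G.
Variable R : realFieldType.
Implicit Types (a b c p q r s y z P Q E : R * R).
Definition orient a b c : R := (b.1 - a.1) * (c.2 - a.2) - (b.2 - a.2) * (c.1 - a.1).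
Definition cmb (l : R) p q : R * R := ((1-l) * p.1 + l * q.1, (1-l) * p.2 + l * q.2).

Lemma on_seg_cmb l p q : 0 <= l -> l <= 1 -> on_seg (cmb l p q) p q.
Proof. by move=> h1 h2; exists l. Qed.

Lemma on_segE z p q : on_seg z p q -> exists l, [/\ 0 <= l, l <= 1 & z = cmb l p q].
Proof. case: z => z1 z2 [l [h1 [h2 [/= e1 e2]]]]; exists l; split => //; by rewrite /cmb -e1 -e2. Qed.

Lemma orient_cmb u v l p q : orient u v (cmb l p q) = (1-l) * orient u v p + l * orient u v q.
Proof. rewrite /orient /cmb /=; ring. Qed.

Lemma orient_cyc a b c : orient a b c = orient b c a.
Proof. rewrite /orient; ring. Qed.
Lemma orient_swap a b c : orient a b c = - orient b a c.
Proof. rewrite /orient; ring. Qed.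

Lemma seg_sym z p q : on_seg z p q -> on_seg z q p.
Proof.
move=> [l [h1 [h2 [e1 e2]]]]; exists (1 - l); do ! split.
- by rewrite subr_ge0. - by rewrite lerBlDr lerDl.
- by rewrite e1; ring. - by rewrite e2; ring.
Qed.

Lemma seg_l p q : on_seg p p q.
Proof. exists 0; do ! split => //; rewrite ?ler01 //; ring. Qed.
Lemma seg_r p q : on_seg q p q.
Proof. exists 1; do ! split => //; rewrite ?ler01 //; ring. Qed.

Lemma seg_sub e a b z : on_seg e a b -> on_seg z e a -> on_seg z a b.
Proof.
move=> [l [h1 [h2 [e1 e2]]]] [m [k1 [k2 [f1 f2]]]].
exists ((1 - m) * l); do ! split.
- apply: mulr_ge0 => //; by rewrite subr_ge0.
- have : (1 - m) * l <= 1 * 1 by apply: ler_pM => //; [rewrite subr_ge0 | rewrite lerBlDr lerDl].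
  by rewrite mulr1.
- rewrite f1 e1; ring. - rewrite f2 e2; ring.
Qed.

Lemma bary1 (x1 x2 : R*R) y P : orient x1 x2 y * P.1 = orient x2 y P * x1.1 + orient y x1 P * x2.1 + orient x1 x2 P * y.1.
Proof. rewrite /orient; ring. Qed.
Lemma bary2 (x1 x2 : R*R) y P : orient x1 x2 y * P.2 = orient x2 y P * x1.2 + orient y x1 P * x2.2 + orient x1 x2 P * y.2.
Proof. rewrite /orient; ring. Qed.
Lemma bary_sum (x1 x2 : R*R) y P : orient x1 x2 P + orient x2 y P + orient y x1 P = orient x1 x2 y.
Proof. rewrite /orient; ring. Qed.

Lemma ratio01 (u v : R) : u * v < 0 -> 0 < u / (u - v) < 1.
Proof.
move=> h.
have hd : u - v != 0.
  apply/eqP => e; have e' : v = u by lra.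
  by move: h; rewrite e' -expr2 ltNge sqr_ge0.
have hw := mulfV hd.
set w := (u - v)^-1 in hw *.
have [hu|hu|hu] := ltgtP u 0.
- have hv : 0 < v by nra.
  have hw0 : w < 0 by nra.
  apply/andP; split; nra.
- have hv : v < 0 by nra.
  have hw0 : 0 < w by nra.
  apply/andP; split; nra.
- by rewrite hu mul0r ltxx in h.
Qed.

Lemma seg_cross p q r s :
  orient r s p * orient r s q < 0 -> orient p q r * orient p q s < 0 ->
  exists E, on_seg E p q /\ on_seg E r s.
Proof.
move=> h1 h2.
have /andP[l0 l1] := ratio01 h1.
have /andP[m0 m1] := ratio01 h2.
exists (cmb (orient r s p / (orient r s p - orient r s q)) p q); split.
  by apply: on_seg_cmb; lra.
exists (orient p q r / (orient p q r - orient p q s)); do ! split; try lra.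
- have d1 : orient r s p - orient r s q != 0.
    apply/eqP => e; move: h1; have -> : orient r s q = orient r s p by lra.
    by rewrite -expr2 ltNge sqr_ge0.
  have d2 : orient p q r - orient p q s != 0.
    apply/eqP => e; move: h2; have -> : orient p q s = orient p q r by lra.
    by rewrite -expr2 ltNge sqr_ge0.
  move: d1 d2; rewrite /cmb /orient /= => d1 d2; field; by rewrite d1 d2.
- have d1 : orient r s p - orient r s q != 0.
    apply/eqP => e; move: h1; have -> : orient r s q = orient r s p by lra.
    by rewrite -expr2 ltNge sqr_ge0.
  have d2 : orient p q r - orient p q s != 0.
    apply/eqP => e; move: h2; have -> : orient p q s = orient p q r by lra.
    by rewrite -expr2 ltNge sqr_ge0.
  move: d1 d2; rewrite /cmb /orient /= => d1 d2; field; by rewrite d1 d2.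
Qed.

Definition inn (x1 x2 y P : R * R) : bool :=
  [&& 0 <= orient x1 x2 P, 0 < orient x2 y P & 0 < orient y x1 P].
Definition openb (x1 x2 E : R * R) := exists m : R, 0 < m /\ m < 1 /\ E = cmb m x1 x2.

Lemma pairE (u v : R * R) : u.1 = v.1 -> u.2 = v.2 -> u = v.
Proof. by case: u => ? ?; case: v => ? ? /= -> ->. Qed.

Lemma onseg_b0 (x1 x2 : R * R) y Z : 0 < orient x1 x2 y -> orient x2 y Z = 0 ->
  0 <= orient x1 x2 Z -> 0 <= orient y x1 Z -> on_seg Z y x2.
Proof.
move=> hD hb ha hc.
have hs := bary_sum x1 x2 y Z; rewrite hb addr0 in hs.
have e1 := bary1 x1 x2 y Z; have e2 := bary2 x1 x2 y Z.
rewrite hb mul0r add0r in e1 e2.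
have hD0 : orient x1 x2 y != 0 by rewrite gt_eqF.
have ea : orient x1 x2 Z = orient x1 x2 y - orient y x1 Z by lra.
rewrite ea in e1 e2.
exists (orient y x1 Z / orient x1 x2 y); do ! split.
- by rewrite divr_ge0 // ltW.
- by rewrite ler_pdivrMr // mul1r; lra.
- rewrite -[Z.1](mulKf hD0) e1; field; exact: hD0.
- rewrite -[Z.2](mulKf hD0) e2; field; exact: hD0.
Qed.

Lemma onseg_c0 (x1 x2 : R * R) y Z : 0 < orient x1 x2 y -> orient y x1 Z = 0 ->
  0 <= orient x1 x2 Z -> 0 <= orient x2 y Z -> on_seg Z x1 y.
Proof.
move=> hD hc ha hb.
have hs := bary_sum x1 x2 y Z; rewrite hc addr0 in hs.
have e1 := bary1 x1 x2 y Z; have e2 := bary2 x1 x2 y Z.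
rewrite hc mul0r addr0 in e1 e2.
have hD0 : orient x1 x2 y != 0 by rewrite gt_eqF.
have eb : orient x2 y Z = orient x1 x2 y - orient x1 x2 Z by lra.
rewrite eb in e1 e2.
exists (orient x1 x2 Z / orient x1 x2 y); do ! split.
- by rewrite divr_ge0 // ltW.
- by rewrite ler_pdivrMr // mul1r; lra.
- rewrite -[Z.1](mulKf hD0) e1; field; exact: hD0.
- rewrite -[Z.2](mulKf hD0) e2; field; exact: hD0.
Qed.

Lemma openb_of (x1 x2 : R * R) y Z : 0 < orient x1 x2 y -> orient x1 x2 Z = 0 ->
  0 < orient x2 y Z -> 0 < orient y x1 Z -> openb x1 x2 Z.
Proof.
move=> hD ha hb hc.
have hs := bary_sum x1 x2 y Z; rewrite ha add0r in hs.
have e1 := bary1 x1 x2 y Z; have e2 := bary2 x1 x2 y Z.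
rewrite ha mul0r addr0 in e1 e2.
have hD0 : orient x1 x2 y != 0 by rewrite gt_eqF.
have eb : orient x2 y Z = orient x1 x2 y - orient y x1 Z by lra.
rewrite eb in e1 e2.
exists (orient y x1 Z / orient x1 x2 y); do ! split.
- by rewrite divr_gt0.
- by rewrite ltr_pdivrMr // mul1r; lra.
- apply: pairE => /=.
  + rewrite -[Z.1](mulKf hD0) e1; field; exact: hD0.
  + rewrite -[Z.2](mulKf hD0) e2; field; exact: hD0.
Qed.

Lemma inn_openb (x1 x2 : R * R) y E : openb x1 x2 E -> 0 < orient x1 x2 y -> inn x1 x2 y E.
Proof.
move=> [m [m0 [m1 ->]]] hD; rewrite /inn !orient_cmb.
have -> : orient x1 x2 x1 = 0 by rewrite /orient; ring.
have -> : orient x1 x2 x2 = 0 by rewrite /orient; ring.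
have -> : orient x2 y x2 = 0 by rewrite /orient; ring.
have -> : orient y x1 x1 = 0 by rewrite /orient; ring.
have -> : orient x2 y x1 = orient x1 x2 y by rewrite /orient; ring.
have -> : orient y x1 x2 = orient x1 x2 y by rewrite /orient; ring.
apply/and3P; split; nra.
Qed.

Lemma cmb_val (fP fQ gP gQ : R) : gP != gQ ->
  (1 - gP / (gP - gQ)) * fP + gP / (gP - gQ) * fQ = (gP * fQ - fP * gQ) / (gP - gQ).
Proof. move=> h; have h' : gP - gQ != 0 by rewrite subr_eq0. field; exact: h'. Qed.

Lemma arith (aP bP cP aQ bQ cQ : R) :
  0 <= aP -> 0 < bP -> 0 < cP -> aQ + bQ + cQ = aP + bP + cP ->
  (aQ < 0 \/ bQ <= 0 \/ cQ <= 0) ->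
  (bQ <= 0 -> bP * aQ - aP * bQ < 0 \/ 0 < cP * bQ - bP * cQ) ->
  (cQ <= 0 -> 0 < aP * cQ - cP * aQ \/ cP * bQ - bP * cQ < 0) ->
  [/\ aQ < 0, bP * aQ - aP * bQ < 0 & 0 < aP * cQ - cP * aQ].
Proof.
move=> ha hb hc hs hn Hb Hc.
have [bq|bq] := lerP bQ 0; have [cq|cq] := lerP cQ 0.
- have aq : 0 < aQ by lra.
  case: (Hb bq) => h1; case: (Hc cq) => h2; exfalso; nra.
- case: (Hb bq) => h1.
  + have aq : aQ < 0 by nra.
    split => //; nra.
  + exfalso; nra.
- case: (Hc cq) => h2.
  + have aq : aQ < 0 by nra.
    split => //; nra.
  + exfalso; nra.
- have aq : aQ < 0 by case: hn => [//|[h|h]]; lra.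
  split => //; nra.
Qed.

Lemma cross_at (P Q : R * R) (gP gQ : R) : 0 <= gP / (gP - gQ) -> gP / (gP - gQ) <= 1 ->
  gP != gQ ->
  let Z := cmb (gP / (gP - gQ)) P Q in
  on_seg Z P Q /\ forall u v, orient u v Z = (gP * orient u v Q - orient u v P * gQ) / (gP - gQ).
Proof.
move=> h0 h1 hn Z; split; first exact: on_seg_cmb.
by move=> u v; rewrite /Z orient_cmb cmb_val.
Qed.

Lemma exit (x1 x2 y P Q : R * R) : 0 < orient x1 x2 y -> inn x1 x2 y P -> ~~ inn x1 x2 y Q ->
  (forall E, on_seg E P Q -> ~ on_seg E x1 y /\ ~ on_seg E y x2) ->
  orient x1 x2 Q < 0 /\ exists E, on_seg E P Q /\ openb x1 x2 E.
Proof.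
move=> hD /and3P[ha hb hc] hQ hav.
have hs := bary_sum x1 x2 y P; have hs' := bary_sum x1 x2 y Q.
set aP := orient x1 x2 P in ha hs *; set bP := orient x2 y P in hb hs *;
set cP := orient y x1 P in hc hs *.
set aQ := orient x1 x2 Q in hs' hQ *; set bQ := orient x2 y Q in hs' hQ *;
set cQ := orient y x1 Q in hs' hQ *.
have hn : aQ < 0 \/ bQ <= 0 \/ cQ <= 0.
  case: (ltP aQ 0) => h1; first by left.
  case: (leP bQ 0) => h2; first by right; left.
  case: (leP cQ 0) => h3; first by right; right.
  by move: hQ; rewrite /inn -/aQ -/bQ -/cQ h1 h2 h3.
have Hb : bQ <= 0 -> bP * aQ - aP * bQ < 0 \/ 0 < cP * bQ - bP * cQ.
  move=> bq; case: (ltP (bP * aQ - aP * bQ) 0) => h1; first by left.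
  case: (ltP 0 (cP * bQ - bP * cQ)) => h2; first by right.
  exfalso.
  have hne : bP != bQ by rewrite gt_eqF //; lra.
  have hd : 0 < bP - bQ by lra.
  have l0 : 0 <= bP / (bP - bQ) by rewrite divr_ge0 // ltW.
  have l1 : bP / (bP - bQ) <= 1 by rewrite ler_pdivrMr // mul1r; lra.
  have [hz ho] := cross_at P Q l0 l1 hne.
  apply: (hav _ hz).2; apply: (onseg_b0 hD).
  - rewrite ho -/bQ -/bP; apply/eqP; rewrite mulf_eq0; apply/orP; left; apply/eqP; ring.
  - by rewrite ho -/bQ -/aP -/aQ ; apply: divr_ge0; lra.
  - by rewrite ho -/bQ -/cQ -/cP ; apply: divr_ge0; lra.
have Hc : cQ <= 0 -> 0 < aP * cQ - cP * aQ \/ cP * bQ - bP * cQ < 0.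
  move=> cq; case: (ltP 0 (aP * cQ - cP * aQ)) => h1; first by left.
  case: (ltP (cP * bQ - bP * cQ) 0) => h2; first by right.
  exfalso.
  have hne : cP != cQ by rewrite gt_eqF //; lra.
  have hd : 0 < cP - cQ by lra.
  have l0 : 0 <= cP / (cP - cQ) by rewrite divr_ge0 // ltW.
  have l1 : cP / (cP - cQ) <= 1 by rewrite ler_pdivrMr // mul1r; lra.
  have [hz ho] := cross_at P Q l0 l1 hne.
  apply: (hav _ hz).1; apply: (onseg_c0 hD).
  - rewrite ho -/cQ -/cP; apply/eqP; rewrite mulf_eq0; apply/orP; left; apply/eqP; ring.
  - by rewrite ho -/cQ -/aP -/aQ ; apply: divr_ge0; lra.
  - by rewrite ho -/bQ -/cQ -/bP ; apply: divr_ge0; lra.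
have [aq xab xca] := arith ha hb hc (etrans hs' (esym hs)) hn Hb Hc.
split => //.
have hne : aP != aQ by rewrite gt_eqF //; lra.
have hd : 0 < aP - aQ by lra.
have l0 : 0 <= aP / (aP - aQ) by rewrite divr_ge0 // ltW.
have l1 : aP / (aP - aQ) <= 1 by rewrite ler_pdivrMr // mul1r; lra.
have [hz ho] := cross_at P Q l0 l1 hne.
eexists; split; first exact: hz.
apply: (openb_of hD).
- rewrite ho -/aQ -/aP; apply/eqP; rewrite mulf_eq0; apply/orP; left; apply/eqP; ring.
- by rewrite ho -/bQ -/aQ -/bP ; apply: divr_gt0; lra.
- by rewrite ho -/cQ -/aQ -/cP ; apply: divr_gt0; lra.
Qed.


Lemma inn_trans (x1 x2 y y' P : R * R) : 0 < orient x1 x2 y -> 0 < orient x1 x2 y' ->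
  inn x1 x2 y' y -> inn x1 x2 y P -> inn x1 x2 y' P.
Proof.
move=> hD hD' /and3P[_ hb hc] /and3P[ha hbP hcP].
have e1 : orient x1 x2 y * orient x2 y' P =
   orient x2 y P * orient x1 x2 y' + orient x1 x2 P * orient x2 y' y by rewrite /orient; ring.
have e2 : orient x1 x2 y * orient y' x1 P =
   orient y x1 P * orient x1 x2 y' + orient x1 x2 P * orient y' x1 y by rewrite /orient; ring.
apply/and3P; split => //.
- have : 0 < orient x1 x2 y * orient x2 y' P by rewrite e1; nra.
  by rewrite pmulr_rgt0.
- have : 0 < orient x1 x2 y * orient y' x1 P by rewrite e2; nra.
  by rewrite pmulr_rgt0.
Qed.

Lemma inn_irr (x1 x2 y : R * R) : ~~ inn x1 x2 y y.
Proof. rewrite /inn; have -> : orient x2 y y = 0 by rewrite /orient; ring. by rewrite ltxx andbF. Qed.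

Lemma nest (x1 x2 y y' : R * R) : 0 < orient x1 x2 y -> 0 < orient x1 x2 y' ->
  (forall E, on_seg E x1 y -> ~ on_seg E x2 y') ->
  (forall E, on_seg E x2 y -> ~ on_seg E x1 y') ->
  inn x1 x2 y y' || inn x1 x2 y' y.
Proof.
move=> hD hD' h1 h2.
have sum := bary_sum x1 x2 y y'.
have eb : orient x2 y' y = - orient x2 y y' by rewrite /orient; ring.
have ec : orient y' x1 y = - orient y x1 y' by rewrite /orient; ring.
have [b0|b0|b0] := ltgtP (orient x2 y y') 0; have [c0|c0|c0] := ltgtP (orient y x1 y') 0.
- by apply/orP; right; apply/and3P; split; [exact: ltW | rewrite eb; lra | rewrite ec; lra].
- exfalso; case: (@seg_cross x2 y x1 y') => [||E [hE1 hE2]]; last exact: (h2 _ hE1 hE2).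
  + have -> : orient x1 y' x2 = - orient x1 x2 y' by rewrite /orient; ring.
    have -> : orient x1 y' y = orient y x1 y' by rewrite /orient; ring.
    nra.
  + have -> : orient x2 y x1 = orient x1 x2 y by rewrite /orient; ring.
    nra.
- exfalso; have hy : on_seg y x1 y'.
    apply: (onseg_c0 hD'); [rewrite ec c0; ring | exact: ltW | rewrite eb; lra].
  exact: (h2 _ (seg_r x2 y) hy).
- exfalso; case: (@seg_cross x1 y x2 y') => [||E [hE1 hE2]]; last exact: (h1 _ hE1 hE2).
  + rewrite eb; have -> : orient x2 y' x1 = orient x1 x2 y' by rewrite /orient; ring.
    nra.
  + have -> : orient x1 y x2 = - orient x1 x2 y by rewrite /orient; ring.
    have -> : orient x1 y y' = - orient y x1 y' by rewrite /orient; ring.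
    nra.
- by apply/orP; left; apply/and3P; split => //; exact: ltW.
- exfalso; have hy : on_seg y' x1 y by apply: (onseg_c0 hD) => //; exact: ltW.
  exact: (h1 _ hy (seg_r x2 y')).
- exfalso; have hy : on_seg y y' x2.
    apply: (onseg_b0 hD'); [rewrite eb b0; ring | exact: ltW | rewrite ec; lra].
  exact: (h1 _ (seg_r x1 y) (seg_sym hy)).
- exfalso; have hy : on_seg y' y x2 by apply: (onseg_b0 hD) => //; exact: ltW.
  exact: (h2 _ (seg_sym hy) (seg_r x1 y')).
- exfalso; have hy : on_seg y' y x2 by apply: (onseg_b0 hD) => //; [exact: ltW | rewrite c0].
  exact: (h2 _ (seg_sym hy) (seg_r x1 y')).
Qed.


Lemma cmb0 (x1 x2 : R * R) : cmb 0 x1 x2 = x1.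
Proof. by apply: pairE; rewrite /cmb /=; ring. Qed.
Lemma cmb1 (x1 x2 : R * R) : cmb 1 x1 x2 = x2.
Proof. by apply: pairE; rewrite /cmb /=; ring. Qed.

Lemma cmb_between (x1 x2 : R * R) (t1 t2 u : R) : t1 <= u -> u <= t2 ->
  on_seg (cmb u x1 x2) (cmb t1 x1 x2) (cmb t2 x1 x2).
Proof.
move=> h1 h2.
have [e|ne] := eqVneq t1 t2.
  have -> : u = t1 by rewrite e in h1 *; apply/eqP; rewrite eq_le h1 h2.
  exact: seg_l.
have hd : 0 < t2 - t1 by rewrite subr_gt0 lt_neqAle ne (le_trans h1 h2).
have hd0 : t2 - t1 != 0 by rewrite gt_eqF.
exists ((u - t1) / (t2 - t1)); do ! split.
- by apply: divr_ge0; lra.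
- by rewrite ler_pdivrMr // mul1r; lra.
- rewrite /cmb /=; field; exact: hd0.
- rewrite /cmb /=; field; exact: hd0.
Qed.

Lemma online_param (x1 x2 w : R * R) : x1 != x2 -> orient x1 x2 w = 0 ->
  exists t, w = cmb t x1 x2.
Proof.
move=> hne ho.
set d1 := x2.1 - x1.1; set d2 := x2.2 - x1.2.
have hN : 0 < d1 * d1 + d2 * d2.
  have : (d1 != 0) || (d2 != 0).
    apply: contraR hne; rewrite negb_or !negbK /d1 /d2 !subr_eq0 => /andP[/eqP e1 /eqP e2].
    by apply/eqP; apply: pairE.
  case/orP => h.
  - have : 0 < d1 ^+ 2 by rewrite exprn_even_gt0 // h orbT.
    rewrite expr2 => h'; have := sqr_ge0 d2; rewrite expr2; lra.
  - have : 0 < d2 ^+ 2 by rewrite exprn_even_gt0 // h orbT.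
    rewrite expr2 => h'; have := sqr_ge0 d1; rewrite expr2; lra.
have hN0 : d1 * d1 + d2 * d2 != 0 by rewrite gt_eqF.
set N := d1 * d1 + d2 * d2 in hN hN0.
set T := (w.1 - x1.1) * d1 + (w.2 - x1.2) * d2.
move: ho; rewrite /orient -/d1 -/d2 => ho.
have k1 : N * (w.1 - x1.1) = T * d1.
  have : N * (w.1 - x1.1) - T * d1 = - d2 * (d1 * (w.2 - x1.2) - d2 * (w.1 - x1.1)) by rewrite /N /T; ring.
  rewrite ho mulr0 => /eqP; rewrite subr_eq0 => /eqP //.
have k2 : N * (w.2 - x1.2) = T * d2.
  have : N * (w.2 - x1.2) - T * d2 = d1 * (d1 * (w.2 - x1.2) - d2 * (w.1 - x1.1)) by rewrite /N /T; ring.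
  rewrite ho mulr0 => /eqP; rewrite subr_eq0 => /eqP //.
have u1 : w.1 - x1.1 = T / N * d1 by rewrite -(mulKf hN0 (w.1 - x1.1)) k1; field.
have u2 : w.2 - x1.2 = T / N * d2 by rewrite -(mulKf hN0 (w.2 - x1.2)) k2; field.
exists (T / N); apply: pairE; rewrite /cmb /=.
- have -> : w.1 = x1.1 + T / N * d1 by rewrite -u1; ring.
  rewrite /d1; ring.
- have -> : w.2 = x1.2 + T / N * d2 by rewrite -u2; ring.
  rewrite /d2; ring.
Qed.

Lemma two_online (x1 x2 w w' : R * R) : x1 != x2 ->
  orient x1 x2 w = 0 -> orient x1 x2 w' = 0 ->
  (forall E, on_seg E x1 w -> ~ on_seg E x2 w') ->
  (forall E, on_seg E x1 w' -> ~ on_seg E x2 w) -> False.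
Proof.
move=> hne hw hw' h1 h2.
have [t et] := online_param hne hw; have [t' et'] := online_param hne hw'.
have c0 := cmb0 x1 x2; have c1 := cmb1 x1 x2.
have [ht|ht] := lerP t 0.
  have : on_seg (cmb 0 x1 x2) (cmb t x1 x2) (cmb 1 x1 x2) by apply: cmb_between; lra.
  rewrite c0 c1 -et => h; exact: (h2 x1 (seg_l _ _) (seg_sym h)).
have [ht1|ht1] := lerP 1 t.
  have : on_seg (cmb 1 x1 x2) (cmb 0 x1 x2) (cmb t x1 x2) by apply: cmb_between; lra.
  rewrite c0 c1 -et => h; exact: (h1 x2 h (seg_l _ _)).
have [ht'|ht'] := lerP t' 0.
  have : on_seg (cmb 0 x1 x2) (cmb t' x1 x2) (cmb 1 x1 x2) by apply: cmb_between; lra.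
  rewrite c0 c1 -et' => h; exact: (h1 x1 (seg_l _ _) (seg_sym h)).
have [ht1'|ht1'] := lerP 1 t'.
  have : on_seg (cmb 1 x1 x2) (cmb 0 x1 x2) (cmb t' x1 x2) by apply: cmb_between; lra.
  rewrite c0 c1 -et' => h; exact: (h2 x2 h (seg_l _ _)).
have [tt|tt] := lerP t t'.
  have : on_seg (cmb t x1 x2) (cmb 0 x1 x2) (cmb t' x1 x2) by apply: cmb_between; lra.
  rewrite c0 -et -et' => h; exact: (h2 w h (seg_r _ _)).
have : on_seg (cmb t' x1 x2) (cmb 0 x1 x2) (cmb t x1 x2) by apply: cmb_between; lra.
rewrite c0 -et -et' => h; exact: (h1 w' h (seg_r _ _)).
Qed.

End G.

End GeoM.
Import GeoM.

Module FanM.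
Set Implicit Arguments. Unset Strict Implicit. Unset Printing Implicit Defensive.
Import Order.TTheory GRing.Theory Num.Theory.

Lemma count_lt_sub (T : eqType) (a1 a2 : pred T) (s : seq T) :
  (forall x, x \in s -> a1 x -> a2 x) -> (exists2 x, x \in s & a2 x && ~~ a1 x) ->
  (count a1 s < count a2 s)%N.
Proof.
elim: s => [|y s IH] sub [x]; first by rewrite in_nil.
have sub' : forall x, x \in s -> a1 x -> a2 x by move=> z hz; apply: sub; rewrite in_cons hz orbT.
have le' : (count a1 s <= count a2 s)%N.
  elim: s {IH} sub' {sub} => [|z s' IH'] h //=.
  have := IH' (fun w hw => h w (mem_behead (s:=z :: s') hw)).
  case h1: (a1 z); first by rewrite (h z (mem_head _ _) h1) /=; lia.
  case: (a2 z) => /=; lia.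
rewrite in_cons => /orP[/eqP ->|hx] hxa /=.
- by case/andP: hxa => -> /negbTE ->; rewrite add0n add1n ltnS.
- have := IH sub' (ex_intro2 _ _ x hx hxa).
  case h1: (a1 y); first by rewrite (sub y (mem_head _ _) h1) /=; lia.
  case: (a2 y) => /=; lia.
Qed.

Definition adjn (n x y : nat) : Prop :=
  y = x.+1 \/ x = y.+1 \/ (x = n.-1 /\ y = 0) \/ (y = n.-1 /\ x = 0).

Lemma modS (n x : nat) : x < n -> (x.+1 %% n = x.+1 /\ x.+1 < n) \/ (x.+1 %% n = 0 /\ x.+1 = n).
Proof.
move=> h; case: (ltngtP x.+1 n) => h'.
- by left; rewrite modn_small.
- lia.
- by right; rewrite h' modnn.
Qed.

Lemma comb2 (n r r' d : nat) : r < n -> r' < n -> r <> r' ->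
  (d = r %% n \/ d = r.+1 %% n) -> (d = r' %% n \/ d = r'.+1 %% n) -> adjn n r r'.
Proof.
move=> h h' hne; rewrite (modn_small h) (modn_small h') /adjn.
have := modS h; have := modS h'; lia.
Qed.

Section Fan.
Variable R : realFieldType.
Local Open Scope ring_scope.
Variable pt : V -> R * R.
Variables x1 x2 : R * R.
Variable S : seq V.
Hypothesis Suniq : uniq S.
Hypothesis hpos : forall v, v \in S -> 0 < orient x1 x2 (pt v).
Hypothesis hcross : forall v w, v \in S -> w \in S -> v <> w ->
  forall E, on_seg E x1 (pt v) -> ~ on_seg E x2 (pt w).

Definition depth (P : R * R) : nat := count (fun v => inn x1 x2 (pt v) P) S.
Definition rank (v : V) : nat := depth (pt v).
Local Notation n := (size S).

Lemma rank_lt v : v \in S -> (rank v < n)%N.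
Proof.
move=> hv; rewrite /rank /depth -(count_predC (fun w => inn x1 x2 (pt w) (pt v))).
rewrite -[X in (X < _)%N]addn0 ltn_add2l -has_count; apply/hasP; exists v => //=.
exact: inn_irr.
Qed.

Lemma rank_lt_of v w : v \in S -> w \in S -> inn x1 x2 (pt v) (pt w) -> (rank v < rank w)%N.
Proof.
move=> hv hw hvw; apply: count_lt_sub.
- by move=> u hu h; apply: (inn_trans (hpos hv) (hpos hu) h hvw).
- by exists v => //; rewrite hvw inn_irr.
Qed.


Lemma pt_neq v w : v \in S -> w \in S -> v <> w -> pt v <> pt w.
Proof. move=> hv hw hvw e; apply: (hcross hv hw hvw (seg_r x1 (pt v))); rewrite e; exact: seg_r. Qed.

Lemma rank_inj v w : v \in S -> w \in S -> rank v = rank w -> v = w.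
Proof.
move=> hv hw e; apply/eqP; apply: contraT => /eqP hne.
have h1 : forall E, on_seg E x1 (pt v) -> ~ on_seg E x2 (pt w) by exact: hcross.
have h2 : forall E, on_seg E x2 (pt v) -> ~ on_seg E x1 (pt w).
  by move=> E a b; apply: (hcross hw hv (fun e => hne (esym e)) b a).
case/orP: (nest (hpos hv) (hpos hw) h1 h2) => h.
- by have := rank_lt_of hv hw h; rewrite e ltnn.
- by have := rank_lt_of hw hv h; rewrite e ltnn.
Qed.

Lemma depth_nonpos P : orient x1 x2 P <= 0 -> (depth P %% n = 0)%N.
Proof.
move=> ha.
case hh: (has (fun v => inn x1 x2 (pt v) P) S).
- case/hasP: hh => w hw /and3P[ha' hb hc].
  have a0 : orient x1 x2 P = 0 by apply/eqP; rewrite eq_le ha ha'.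
  have ob := openb_of (hpos hw) a0 hb hc.
  rewrite /depth (eq_in_count (a2 := predT)); first by rewrite count_predT modnn.
  by move=> u hu; apply: inn_openb => //; exact: hpos.
- rewrite /depth; move/negbT: hh; rewrite has_count -leqNgt leqn0 => /eqP ->; by rewrite mod0n.
Qed.

Lemma region P v : v \in S ->
  (forall E, on_seg E P (pt v) -> forall w, w \in S ->
      (on_seg E x1 (pt w) \/ on_seg E (pt w) x2) -> w = v /\ E = pt v) ->
  (depth P %% n = rank v %% n \/ depth P %% n = (rank v).+1 %% n)%N.
Proof.
move=> hv hseg.
set y := pt v.
have avoid : forall w, w \in S -> w <> v -> forall E, on_seg E y P ->
    ~ on_seg E x1 (pt w) /\ ~ on_seg E (pt w) x2.
  move=> w hw hwv E hE; split => h.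
  - by have [] := hseg E (seg_sym hE) w hw (or_introl h).
  - by have [] := hseg E (seg_sym hE) w hw (or_intror h).
case hh: (has (fun w => (w != v) && inn x1 x2 (pt w) y && ~~ inn x1 x2 (pt w) P) S).
- case/hasP: hh => w hw /andP[/andP[/eqP hwv hin] hout].
  have [aP [E [hE hob]]] := exit (hpos hw) hin hout (avoid w hw hwv).
  right.
  have d0 : depth P = 0%N.
    apply/eqP; rewrite -leqn0 leqNgt -has_count; apply/hasP => -[u hu /and3P[h _ _]].
    by move: h; rewrite leNgt aP.
  have rn : rank v = n.-1.
    rewrite /rank /depth -/y (eq_in_count (a2 := predC1 v)).
      have := count_predC (pred1 v) S; rewrite -/(count_mem v S) (count_uniq_mem _ Suniq) hv.
      by move=> <-; rewrite add1n.
    move=> u hu /=; case: eqP => [->|huv]; first by apply/negbTE; exact: inn_irr.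
    apply/negPn/negP => hnot.
    have hEi : inn x1 x2 (pt u) E := inn_openb hob (hpos hu).
    have av' : forall E', on_seg E' E y -> ~ on_seg E' x1 (pt u) /\ ~ on_seg E' (pt u) x2.
      by move=> E' hE'; apply: (avoid u hu huv); exact: (seg_sub hE hE').
    have [ay _] := exit (hpos hu) hEi hnot av'.
    by move: (hpos hv); rewrite -/y ltNge (ltW ay).
  have n0 : (0 < n)%N by case: (S) hv.
  by rewrite d0 rn prednK // mod0n modnn.
- have eqin : forall w, w \in S -> w != v -> inn x1 x2 (pt w) P = inn x1 x2 (pt w) y.
    move=> w hw hwv; case h1: (inn x1 x2 (pt w) y).
    + by apply/negPn/negP => h2; move/negP: hh; apply; apply/hasP; exists w => //; rewrite hwv h1 h2.
    + apply/negbTE/negP => h2.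
      have [ay _] := exit (hpos hw) h2 (negbT h1) (fun E hE => avoid w hw (fun e => negP hwv (introT eqP e)) E (seg_sym hE)).
      by move: (hpos hv); rewrite -/y ltNge (ltW ay).
  have [S1 pS] : exists S1, perm_eq S (v :: S1).
    by exists (rem v S); exact: perm_to_rem.
  have uS1 : uniq (v :: S1) by rewrite -(perm_uniq pS).
  have hS1 : forall w, w \in S1 -> w \in S /\ w != v.
    move=> w hw; split; first by rewrite (perm_mem pS) in_cons hw orbT.
    by apply: contraTneq hw => ->; case/andP: uS1.
  have pc := permP pS.
  rewrite /rank /depth !pc /= -/y (negbTE (inn_irr _ _ _)) add0n.
  rewrite (eq_in_count (a1 := fun w => inn x1 x2 (pt w) P) (a2 := fun w => inn x1 x2 (pt w) y)); last first.
    by move=> w hw; have [a b] := hS1 w hw; exact: eqin.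
  by case: (inn x1 x2 y P); [right; rewrite add1n | left; rewrite add0n].
Qed.


Lemma half_eq (R' : realFieldType) (a b l : R') : 0 <= l ->
  a = (1 - l) * ((1 - 1/2) * b + 1/2 * a) + l * b -> a = b.
Proof.
move=> hl e.
have h : (a - b) * (1 + l) = 0.
  have -> : (a - b) * (1 + l) = 2 * (a - ((1 - l) * ((1 - 1/2) * b + 1/2 * a) + l * b)) by field.
  by rewrite -e subrr mulr0.
move/eqP: h; rewrite mulf_eq0 => /orP[/eqP h|/eqP h]; lra.
Qed.

Lemma half_eq2 (R' : realFieldType) (a b l : R') : 0 <= l ->
  a = (1 - l) * ((1 - 1/2) * a + 1/2 * b) + l * b -> a = b.
Proof.
move=> hl e.
have h : (a - b) * (1 + l) = 0.
  have -> : (a - b) * (1 + l) = 2 * (a - ((1 - l) * ((1 - 1/2) * a + 1/2 * b) + l * b)) by field.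
  by rewrite -e subrr mulr0.
move/eqP: h; rewrite mulf_eq0 => /orP[/eqP h|/eqP h]; lra.
Qed.

Lemma edge_adj s s' : s \in S -> s' \in S -> s <> s' ->
  (forall E, on_seg E (pt s) (pt s') -> forall w, w \in S ->
     (on_seg E x1 (pt w) \/ on_seg E (pt w) x2) ->
     (w = s /\ E = pt s) \/ (w = s' /\ E = pt s')) ->
  adjn n (rank s) (rank s').
Proof.
move=> hs hs' hne hseg.
have hneq := pt_neq hs hs' hne.
have h0 : (0 : R) <= 1/2 by rewrite divr_ge0 // ler01.
have h1 : (1/2 : R) <= 1 by rewrite ler_pdivrMr ?ltr0Sn // mul1r ler1n.
set M := cmb (1/2) (pt s) (pt s').
have hM : on_seg M (pt s) (pt s') by exact: on_seg_cmb.
have notin1 : on_seg (pt s') M (pt s) -> pt s = pt s'.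
  move=> [l [l0 [l1 [e1 e2]]]]; rewrite /M /cmb /= in e1 e2.
  by apply: esym; apply: pairE; apply: (half_eq l0).
have notin2 : on_seg (pt s) M (pt s') -> pt s = pt s'.
  move=> [l [l0 [l1 [e1 e2]]]]; rewrite /M /cmb /= in e1 e2.
  by apply: pairE; apply: (half_eq2 l0).
have r1 := @region M s hs.
have r2 := @region M s' hs'.
apply: (comb2 (rank_lt hs) (rank_lt hs') (fun e => hne (rank_inj hs hs' e))).
- apply: r1 => E hE w hw hon.
  have := hseg E (seg_sub hM hE) w hw hon.
  by case=> [//|[ew eE]]; exfalso; apply: hneq; apply: notin1; rewrite -eE.
- apply: r2 => E hE w hw hon.
  have hM' : on_seg M (pt s') (pt s) by exact: seg_sym.
  have := hseg E (seg_sym (seg_sub hM' hE)) w hw hon.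
  by case=> [[ew eE]|//]; exfalso; apply: hneq; apply: notin2; rewrite -eE.
Qed.

End Fan.

End FanM.
Import FanM.

Module FrM.
Set Implicit Arguments. Unset Strict Implicit. Unset Printing Implicit Defensive.
Import Order.TTheory GRing.Theory Num.Theory.

Lemma adj_sym u v : adj u v = adj v u.
Proof. by rewrite /adj orbC. Qed.

Lemma nxt_neq (i : 'I_4) : nxt i != i.
Proof. by case: i => [[|[|[|[|m]]]] h]. Qed.

Lemma adj_irr u : adj u u = false.
Proof.
case: u => [[[k i]|[i j]]|[i j]] //=; rewrite /adj /= orbb ?andbb //.
by rewrite eq_sym (negbTE (nxt_neq i)) andbF.
Qed.

Lemma adj_qc i j k i' : adj (qv i j) (cyc k i').
Proof. by []. Qed.
Lemma adj_cq i j k i' : adj (cyc k i') (qv i j).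
Proof. by rewrite /adj orbT. Qed.
Lemma adj_cc k i : adj (cyc k i) (cyc k (nxt i)).
Proof. by rewrite /adj /= !eqxx. Qed.

Lemma nxt4 (i : 'I_4) : nxt (nxt (nxt (nxt i))) = i.
Proof. by apply/val_inj; case: i => [[|[|[|[|m]]]] h]. Qed.

Lemma nxt_dist (i : 'I_4) : [/\ nxt (nxt i) != i, nxt (nxt (nxt i)) != i &
   nxt (nxt (nxt i)) != nxt i].
Proof. by case: i => [[|[|[|[|m]]]] h]. Qed.

Lemma count_sign (R : realFieldType) (f : V -> R) (s : seq V) :
  (count (fun v => (0 < f v)%R) s + count (fun v => (f v < 0)%R) s + count (fun v => f v == 0%R) s)%N = size s.
Proof.
elim: s => [|x s IH] //; have e : forall a : pred V, count a (x :: s) = (a x + count a s)%N by []; rewrite !e [size _]/= -IH; case: (ltgtP (f x) 0%R) => _ /=; lia.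
Qed.

Lemma two_of (T : eqType) (P : pred T) (s : seq T) : uniq s -> (2 <= count P s)%N ->
  exists a b, [/\ a \in s, b \in s, a != b, P a & P b].
Proof.
move=> us; rewrite -size_filter.
have uf : uniq (filter P s) by exact: filter_uniq.
case ef: (filter P s) uf => [|a [|b r]] //= /andP[ha _] _.
have ma : a \in filter P s by rewrite ef mem_head.
have mb : b \in filter P s by rewrite ef !in_cons eqxx orbT.
move: ma mb; rewrite !mem_filter => /andP[pa sa] /andP[pb sb].
exists a, b; split => //; apply: contraNneq ha => ->; exact: mem_head.
Qed.

Lemma three_of (T : eqType) (s : seq T) : uniq s -> (3 <= size s)%N ->
  exists a b c, [/\ a \in s, b \in s, c \in s & [/\ a != b, a != c & b != c]].
Proof.
case: s => [|a [|b [|c r]]] //= /and4P[ha hb _ _] _.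
exists a, b, c; rewrite !in_cons !eqxx !orbT; split => //; split.
- by apply: contraNneq ha => ->; rewrite mem_head.
- by apply: contraNneq ha => ->; rewrite !in_cons eqxx orbT.
- by apply: contraNneq hb => ->; rewrite mem_head.
Qed.

Definition efact (n : nat) (mx my : bool) (rx ry : nat) : Prop :=
  (mx -> my -> adjn n rx ry) /\ (mx -> ~~ my -> rx = 0 \/ rx = n.-1) /\
  (~~ mx -> my -> ry = 0 \/ ry = n.-1).

Lemma adjn_s n x y : x < n -> y < n -> adjn n x y -> y = x.+1 %% n \/ x = y.+1 %% n.
Proof.
move=> hx hy [e|[e|[[e1 e2]|[e1 e2]]]].
- by left; rewrite e modn_small // -e.
- by right; rewrite e modn_small // -e.
- by left; rewrite e2 e1 prednK ?modnn //; lia.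
- by right; rewrite e2 e1 prednK ?modnn //; lia.
Qed.

Lemma sinj n x y : x < n -> y < n -> x.+1 %% n = y.+1 %% n -> x = y.
Proof.
move=> hx hy /eqP; rewrite -addn1 -(addn1 y) eqn_modDr (modn_small hx) (modn_small hy).
by move/eqP.
Qed.

Lemma iter_s n k y : iter k (fun z => z.+1 %% n) (y %% n) = (y + k) %% n.
Proof.
elim: k => [|k IH] /=; first by rewrite addn0.
rewrite IH -addn1 modnDml; congr (_ %% n); lia.
Qed.

Lemma s4 n x : 5 <= n -> x < n ->
  (((x.+1 %% n).+1 %% n).+1 %% n).+1 %% n <> x.
Proof.
move=> h5 hx.
have := iter_s n 4 x; rewrite (modn_small hx) /= => ->.
case: (ltnP (x + 4) n) => h.
- rewrite modn_small //; lia.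
- have e : x + 4 = (x + 4 - n) + n by rewrite subnK.
  rewrite e modnDr modn_small; lia.
Qed.

Lemma cyc4 n r0 r1 r2 r3 : 5 <= n -> r0 < n -> r1 < n -> r2 < n -> r3 < n ->
  r0 <> r2 -> r1 <> r3 ->
  adjn n r0 r1 -> adjn n r1 r2 -> adjn n r2 r3 -> adjn n r3 r0 -> False.
Proof.
move=> h5 l0 l1 l2 l3 d02 d13 a b c d.
case: (adjn_s l0 l1 a) => {a} a; case: (adjn_s l1 l2 b) => {b} b.
- case: (adjn_s l2 l3 c) => {c} c; case: (adjn_s l3 l0 d) => {d} d.
  + by apply: (s4 h5 l0); rewrite -a -b -c -d.
  + by apply: d13; rewrite a d.
  + by apply: d13; apply: (sinj l1 l3); rewrite -b -c.
  + by apply: d13; apply: (sinj l1 l3); rewrite -b -c.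
- by apply: d02; apply: (sinj l0 l2); rewrite -a -b.
- by apply: d02; rewrite a b.
- case: (adjn_s l2 l3 c) => {c} c; case: (adjn_s l3 l0 d) => {d} d.
  + by apply: d13; apply: (sinj l1 l3); rewrite -a -d.
  + by apply: d13; rewrite b c.
  + by apply: d02; rewrite d c.
  + by apply: (s4 h5 l3); rewrite -c -b -a -d.
Qed.

Lemma two_ends n x : 5 <= n -> x < n -> adjn n x 0 -> adjn n x n.-1 -> False.
Proof.
move=> h5 hx a b.
have e1 : x = 1 \/ x = n.-1 by case: a => [|[|[[]|[]]]]; lia.
have e2 : x = n.-2 \/ x = 0 by case: b => [|[|[[]|[]]]]; lia.
lia.
Qed.

Lemma adjn_sym n x y : adjn n x y -> adjn n y x.
Proof. by rewrite /adjn; tauto. Qed.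

Lemma cyc_rank (n : nat) (m1 m2 m3 : bool) (r0 r1 r2 r3 : nat) : 5 <= n ->
  r0 < n -> (m1 -> r1 < n) -> (m2 -> r2 < n) -> (m3 -> r3 < n) ->
  (m1 -> r0 <> r1) -> (m2 -> r0 <> r2) -> (m3 -> r0 <> r3) ->
  (m1 -> m2 -> r1 <> r2) -> (m1 -> m3 -> r1 <> r3) -> (m2 -> m3 -> r2 <> r3) ->
  efact n true m1 r0 r1 -> efact n m1 m2 r1 r2 -> efact n m2 m3 r2 r3 -> efact n m3 true r3 r0 ->
  r0 = 0 \/ r0 = n.-1.
Proof.
move=> n5 l0 l1 l2 l3 d01 d02 d03 d12 d13 d23 [e1 [e2 _]] [f1 [f2 f3]] [g1 [g2 g3]] [h1 [_ h3]].
case: m1 l1 d01 d12 d13 e1 e2 f1 f2 f3 => l1 d01 d12 d13 e1 e2 f1 f2 f3; last exact: e2.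
case: m3 l3 d03 d13 d23 g1 g2 g3 h1 h3 => l3 d03 d13 d23 g1 g2 g3 h1 h3; last exact: h3.
case: m2 l2 d02 d12 d23 f1 f2 f3 g1 g2 g3 => l2 d02 d12 d23 f1 f2 f3 g1 g2 g3.
- exfalso; exact: (cyc4 n5 l0 (l1 isT) (l2 isT) (l3 isT) (d02 isT) (d13 isT isT)
     (e1 isT isT) (f1 isT isT) (g1 isT isT) (h1 isT isT)).
- exfalso.
  have r1e := f2 isT isT; have r3e := g3 isT isT.
  have a1 := e1 isT isT; have a3 := adjn_sym (h1 isT isT).
  have n13 := d13 isT isT.
  have [[z1 m3]|[m1 z3]] : (r1 = 0 /\ r3 = n.-1) \/ (r1 = n.-1 /\ r3 = 0) by lia.
  + by rewrite z1 in a1; rewrite m3 in a3; exact: (two_ends n5 l0 a1 a3).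
  + by rewrite z3 in a3; rewrite m1 in a1; exact: (two_ends n5 l0 a3 a1).
Qed.

Lemma three_reg (n d ra rb rc : nat) :
  ra < n -> rb < n -> rc < n -> ra <> rb -> ra <> rc -> rb <> rc ->
  (d = ra \/ d = ra.+1 %% n) -> (d = rb \/ d = rb.+1 %% n) -> (d = rc \/ d = rc.+1 %% n) -> False.
Proof.
move=> la lb lc ab ac bc [a|a] [b|b] [c|c].
- by apply: ab; rewrite -a -b.
- by apply: ab; rewrite -a -b.
- by apply: ac; rewrite -a -c.
- by apply: bc; apply: (sinj lb lc); rewrite -b -c.
- by apply: bc; rewrite -b -c.
- by apply: ac; apply: (sinj la lc); rewrite -a -c.
- by apply: ab; apply: (sinj la lb); rewrite -a -b.
- by apply: ab; apply: (sinj la lb); rewrite -a -b.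
Qed.

Lemma one_reg (n r s : nat) : r < n -> (s = r.+1 /\ r.+1 < n \/ s = 0 /\ r.+1 = n) ->
  (0 = r \/ 0 = s) -> r = 0 \/ r = n.-1.
Proof. lia. Qed.

Definition Cs : seq V := [seq cyc x.1 x.2 | x <- enum {: 'I_3 * 'I_4}].

Lemma cyc_inj k i k' i' : cyc k i = cyc k' i' -> k = k' /\ i = i'.
Proof. by case. Qed.

Lemma Cs_uniq : uniq Cs.
Proof.
rewrite map_inj_uniq ?enum_uniq // => [[k i] [k' i']] /cyc_inj [/= -> ->] //.
Qed.

Lemma Cs_size : size Cs = 12%N.
Proof. by rewrite size_map -cardE card_prod !card_ord. Qed.

Lemma mem_Cs k i : cyc k i \in Cs.
Proof. by apply/mapP; exists (k, i) => //; rewrite mem_enum. Qed.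

Lemma Cs_cyc v : v \in Cs -> exists k i, v = cyc k i.
Proof. by case/mapP => [[k i] _ ->]; exists k, i. Qed.

Section Frame.
Variable R : realFieldType.
Local Open Scope ring_scope.
Variable A : V -> nat * nat.
Variable p : V -> R * R.
Variable t : nat.
Hypothesis hfr : frame_planar A p t.
Local Notation vis v := (visible A v t).

Lemma disj u v w x : adj u v -> adj w x -> vis u -> vis v -> vis w -> vis x ->
  u <> w -> u <> x -> v <> w -> v <> x ->
  forall E, on_seg E (p u) (p v) -> ~ on_seg E (p w) (p x).
Proof.
move=> a1 a2 h1 h2 h3 h4 n1 n2 n3 n4 E e1 e2.
case: hfr => _ [_ H3].
have nd : ~ ((u = w /\ v = x) \/ (u = x /\ v = w)) by case=> [[]|[]].
have [y [hy1 [hy2 _]]] := H3 u v w x a1 a2 h1 h2 h3 h4 nd E e1 e2.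
by case: hy1 hy2 => -> [] ?; contradiction.
Qed.

Lemma share u v x : adj u v -> adj u x -> vis u -> vis v -> vis x -> v <> x ->
  forall E, on_seg E (p u) (p v) -> on_seg E (p u) (p x) -> E = p u.
Proof.
move=> a1 a2 h1 h2 h3 n E e1 e2.
case: hfr => _ [_ H3].
have nuv : u <> v by move=> e; rewrite e adj_irr in a1.
have nux : u <> x by move=> e; rewrite e adj_irr in a2.
have nd : ~ ((u = u /\ v = x) \/ (u = x /\ v = u)) by case=> [[]|[]].
have [y [hy1 [hy2 ->]]] := H3 u v u x a1 a2 h1 h2 h1 h3 nd E e1 e2.
by case: hy1 hy2 => -> // [] e; [case: (nuv (esym e)) | case: (n e)].
Qed.


Lemma pinj u v : vis u -> vis v -> u <> v -> p u != p v.
Proof. by move=> h1 h2 n; case: hfr => H1 _; apply/eqP; exact: H1. Qed.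

Definition pos (Z1 Z2 : V) (v : V) : bool := 0 < orient (p Z1) (p Z2) (p v).

Lemma side_split (Y1 Y2 : V) (T : seq V) : Y1 <> Y2 -> vis Y1 -> vis Y2 -> uniq T ->
  (forall v, v \in T -> [/\ vis v, adj Y1 v, adj Y2 v, v <> Y1 & v <> Y2]) ->
  exists Z1 Z2, ((Z1 = Y1 /\ Z2 = Y2) \/ (Z1 = Y2 /\ Z2 = Y1)) /\
    (size T <= 2 * count (pos Z1 Z2) T + 1)%N.
Proof.
move=> n12 v1 v2 uT hT.
have cs := count_sign (fun v => orient (p Y1) (p Y2) (p v)) T.
have z1 : (count (fun v => orient (p Y1) (p Y2) (p v) == 0%R) T <= 1)%N.
  rewrite leqNgt; apply/negP => /(two_of uT) [a [b [ha hb hab /eqP za /eqP zb]]].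
  have [va a1 a2 na1 na2] := hT a ha; have [vb b1 b2 nb1 nb2] := hT b hb.
  apply: (two_online (pinj v1 v2 n12) za zb).
  - have hab' : a <> b by apply/eqP.
    have nb1' : Y1 <> b := fun e => nb1 (esym e).
    by apply: (disj a1 b2).
  - have hab' : b <> a by move=> e; apply: (negP hab); rewrite e.
    have na1' : Y1 <> a := fun e => na1 (esym e).
    by apply: (disj b1 a2).
have ng : count (fun v => orient (p Y1) (p Y2) (p v) < 0) T = count (pos Y2 Y1) T.
  by apply: eq_count => v; rewrite /pos orient_swap oppr_lt0.
rewrite ng in cs.
have e1 : count (fun v => 0 < orient (p Y1) (p Y2) (p v)) T = count (pos Y1 Y2) T by [].
rewrite e1 in cs.
case: (leqP (count (pos Y2 Y1) T) (count (pos Y1 Y2) T)) => h.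
- exists Y1, Y2; split; [by left | lia].
- exists Y2, Y1; split; [by right | lia].
Qed.

Lemma hcross_of (Z1 Z2 : V) (S : seq V) : Z1 <> Z2 -> vis Z1 -> vis Z2 ->
  (forall v, v \in S -> [/\ vis v, adj Z1 v, adj Z2 v, v <> Z1 & v <> Z2]) ->
  forall v w, v \in S -> w \in S -> v <> w ->
  forall E, on_seg E (p Z1) (p v) -> ~ on_seg E (p Z2) (p w).
Proof.
move=> n12 v1 v2 hS v w hv hw nvw.
have [va a1 a2 na1 na2] := hS v hv; have [vb b1 b2 nb1 nb2] := hS w hw.
have nb1' : Z1 <> w := fun e => nb1 (esym e).
by apply: (disj a1 b2).
Qed.

Lemma noK3 (X1 X2 Z : V) (T : seq V) : X1 <> X2 -> X1 <> Z -> X2 <> Z ->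
  vis X1 -> vis X2 -> vis Z -> uniq T -> (7 <= size T)%N ->
  (forall v, v \in T -> [/\ vis v, adj X1 v, adj X2 v, adj Z v &
      [/\ v <> X1, v <> X2 & v <> Z]]) -> False.
Proof.
move=> n12 n1z n2z v1 v2 vz uT sT hT.
have hT' : forall v, v \in T -> [/\ vis v, adj X1 v, adj X2 v, v <> X1 & v <> X2].
  by move=> v hv; have [? ? ? ? [? ? ?]] := hT v hv.
have [Z1 [Z2 [hZ sz]]] := side_split n12 v1 v2 uT hT'.
have [nZ [vZ1 vZ2] hZS] : [/\ Z1 <> Z2, vis Z1 /\ vis Z2 &
    forall v, v \in T -> [/\ vis v, adj Z1 v, adj Z2 v, v <> Z1 & v <> Z2]].
  case: hZ => [[-> ->]|[-> ->]]; split => //.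
  - by move=> e; apply: n12.
  - by move=> v hv; have [? ? ? ? ?] := hT' v hv; split.
set S := filter (pos Z1 Z2) T.
have uS : uniq S by exact: filter_uniq.
have hS : forall v, v \in S -> [/\ vis v, adj Z1 v, adj Z2 v, v <> Z1 & v <> Z2].
  by move=> v; rewrite mem_filter => /andP[_ hv]; exact: hZS.
have hpos : forall v, v \in S -> 0 < orient (p Z1) (p Z2) (p v).
  by move=> v; rewrite mem_filter => /andP[].
have hcr := hcross_of nZ vZ1 vZ2 hS.
have s3 : (3 <= size S)%N by rewrite size_filter; lia.
have [a [b [c [ha hb hc [nab nac nbc]]]]] := three_of uS s3.
have zZ : Z <> Z1 /\ Z <> Z2.
  by case: hZ => [[-> ->]|[-> ->]]; split => e; [exact: n1z (esym e) | exact: n2z (esym e)| exact: n2z (esym e) | exact: n1z (esym e)].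
have reg : forall u, u \in S ->
    (depth p (p Z1) (p Z2) S (p Z) %% size S = rank p (p Z1) (p Z2) S u %% size S \/
     depth p (p Z1) (p Z2) S (p Z) %% size S = (rank p (p Z1) (p Z2) S u).+1 %% size S)%N.
  move=> u hu; apply: (region uS hpos hu) => E hE w hw hon.
  have [vu u1 u2 nu1 nu2] := hS u hu; have [vw w1 w2 nw1 nw2] := hS w hw.
  have uT' : u \in T by move: hu; rewrite mem_filter => /andP[].
  have [_ _ _ uz [_ _ nuz]] := hT u uT'.
  have nzu : Z <> u by move=> e; apply: nuz (esym e).
  have uz' : adj u Z by rewrite adj_sym.
  have u1' : adj u Z1 by rewrite adj_sym.
  have u2' : adj u Z2 by rewrite adj_sym.
  have w2' : adj w Z2 by rewrite adj_sym.
  have [zz1 zz2] := zZ.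
  have z1z : Z1 <> Z := fun e => zz1 (esym e).
  have z2z : Z2 <> Z := fun e => zz2 (esym e).
  case: (eqVneq w u) => [ewu|nwu].
  - subst w; split => //.
    case: hon => hon.
    + exact: (share uz' u1' vu vz vZ1 zz1 (seg_sym hE) (seg_sym hon)).
    + exact: (share uz' u2' vu vz vZ2 zz2 (seg_sym hE) hon).
  - exfalso.
    have nwu' : u <> w by move=> e; rewrite e eqxx in nwu.
    have nw1' : Z1 <> w := fun e => nw1 (esym e).
    have wT : w \in T by move: hw; rewrite mem_filter => /andP[].
    have [_ _ _ _ [_ _ nwz]] := hT w wT.
    have zw : Z <> w := fun e => nwz (esym e).
    case: hon => hon.
    + exact: (disj uz w1 vz vu vZ1 vw zz1 zw nu1 nwu' hE hon).
    + exact: (disj uz w2' vz vu vw vZ2 zw zz2 nwu' nu2 hE hon).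
have ra := reg a ha; have rb := reg b hb; have rc := reg c hc.
have la := rank_lt p (p Z1) (p Z2) ha; have lb := rank_lt p (p Z1) (p Z2) hb;
have lc := rank_lt p (p Z1) (p Z2) hc.
have iab : rank p (p Z1) (p Z2) S a <> rank p (p Z1) (p Z2) S b.
  by move=> e; apply: (negP nab); apply/eqP; exact: (rank_inj hpos hcr ha hb e).
have iac : rank p (p Z1) (p Z2) S a <> rank p (p Z1) (p Z2) S c.
  by move=> e; apply: (negP nac); apply/eqP; exact: (rank_inj hpos hcr ha hc e).
have ibc : rank p (p Z1) (p Z2) S b <> rank p (p Z1) (p Z2) S c.
  by move=> e; apply: (negP nbc); apply/eqP; exact: (rank_inj hpos hcr hb hc e).
move: ra rb rc; rewrite (modn_small la) (modn_small lb) (modn_small lc) => ra rb rc.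
exact: (three_reg la lb lc iab iac ibc ra rb rc).
Qed.


Lemma noOct (q q' : V) : q <> q' -> vis q -> vis q' ->
  (forall k i, [/\ vis (cyc k i), adj q (cyc k i), adj q' (cyc k i), cyc k i <> q & cyc k i <> q']) ->
  False.
Proof.
move=> nqq vq vq' hC.
have hT : forall v, v \in Cs -> [/\ vis v, adj q v, adj q' v, v <> q & v <> q'].
  by move=> v /Cs_cyc [k [i ->]].
have [Z1 [Z2 [hZ sz]]] := side_split nqq vq vq' Cs_uniq hT.
rewrite Cs_size in sz.
have [nZ [vZ1 vZ2] hZS] : [/\ Z1 <> Z2, vis Z1 /\ vis Z2 &
    forall v, v \in Cs -> [/\ vis v, adj Z1 v, adj Z2 v, v <> Z1 & v <> Z2]].
  case: hZ => [[-> ->]|[-> ->]]; split => //.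
  - by move=> e; apply: nqq.
  - by move=> v hv; have [? ? ? ? ?] := hT v hv; split.
set S := filter (pos Z1 Z2) Cs.
have uS : uniq S by exact: (filter_uniq _ Cs_uniq).
have inC : forall v, v \in S -> v \in Cs by move=> v; rewrite mem_filter => /andP[].
have hS : forall v, v \in S -> [/\ vis v, adj Z1 v, adj Z2 v, v <> Z1 & v <> Z2].
  by move=> v /inC; exact: hZS.
have hpos : forall v, v \in S -> 0 < orient (p Z1) (p Z2) (p v).
  by move=> v; rewrite mem_filter => /andP[].
have hcr := hcross_of nZ vZ1 vZ2 hS.
have s6 : (6 <= size S)%N by rewrite size_filter; lia.
set n := size S.
set rk := rank p (p Z1) (p Z2) S.
have both : forall x y, adj x y -> x \in S -> y \in S -> x <> y -> adjn n (rk x) (rk y).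
  move=> x y axy hx hy nxy.
  apply: (edge_adj uS hpos hcr hx hy nxy) => E hE w hw hon.
  have [vx x1 x2 nx1 nx2] := hS x hx; have [vy y1 y2 ny1 ny2] := hS y hy.
  have [vw w1 w2 nw1 nw2] := hS w hw.
  have x1' : adj x Z1 by rewrite adj_sym. have x2' : adj x Z2 by rewrite adj_sym.
  have y1' : adj y Z1 by rewrite adj_sym. have y2' : adj y Z2 by rewrite adj_sym.
  have w2' : adj w Z2 by rewrite adj_sym. have ayx : adj y x by rewrite adj_sym.
  have nyx : y <> x := fun e => nxy (esym e).
  case: (eqVneq w x) => [ewx|nwx].
    subst w; left; split => //; case: hon => hon.
    - exact: (share axy x1' vx vy vZ1 ny1 hE (seg_sym hon)).
    - exact: (share axy x2' vx vy vZ2 ny2 hE hon).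
  case: (eqVneq w y) => [ewy|nwy].
    subst w; right; split => //; case: hon => hon.
    - exact: (share ayx y1' vy vx vZ1 nx1 (seg_sym hE) (seg_sym hon)).
    - exact: (share ayx y2' vy vx vZ2 nx2 (seg_sym hE) hon).
  exfalso.
  have nxw : x <> w by move=> e; rewrite e eqxx in nwx.
  have nyw : y <> w by move=> e; rewrite e eqxx in nwy.
  have nw1' : Z1 <> w := fun e => nw1 (esym e).
  case: hon => hon.
  - exact: (disj axy w1 vx vy vZ1 vw nx1 nxw ny1 nyw hE hon).
  - exact: (disj axy w2' vx vy vw vZ2 nxw nx2 nyw ny2 hE hon).
have one : forall x y, adj x y -> x \in S -> y \in Cs -> y \notin S -> rk x = 0%N \/ rk x = n.-1.
  move=> x y axy hx hyC hy.
  have [vx x1 x2 nx1 nx2] := hS x hx; have [vy y1 y2 ny1 ny2] := hZS y hyC.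
  have x1' : adj x Z1 by rewrite adj_sym. have x2' : adj x Z2 by rewrite adj_sym.
  have ayx : adj y x by rewrite adj_sym.
  have nxy : x <> y by move=> e; rewrite -e hx in hy.
  have hreg := region uS hpos (P := p y) hx.
  have d0 : (depth p (p Z1) (p Z2) S (p y) %% n = 0)%N.
    apply: (depth_nonpos hpos); rewrite leNgt; apply/negP => h.
    by move: hy; rewrite mem_filter hyC andbT /pos h.
  have lx := rank_lt p (p Z1) (p Z2) hx.
  rewrite -/rk -/n in lx *.
  suff h : (0 = rk x %% n \/ 0 = (rk x).+1 %% n)%N.
    by rewrite (modn_small lx) in h; exact: (one_reg lx (modS lx) h).
  rewrite -d0; apply: hreg => E hE w hw hon.
  have [vw w1 w2 nw1 nw2] := hS w hw.
  have w2' : adj w Z2 by rewrite adj_sym.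
  case: (eqVneq w x) => [ewx|nwx].
    subst w; split => //; case: hon => hon.
    - exact: (share axy x1' vx vy vZ1 ny1 (seg_sym hE) (seg_sym hon)).
    - exact: (share axy x2' vx vy vZ2 ny2 (seg_sym hE) hon).
  exfalso.
  have nxw : x <> w by move=> e; rewrite e eqxx in nwx.
  have nyw : y <> w by move=> e; rewrite e hw in hy.
  have nw1' : Z1 <> w := fun e => nw1 (esym e).
  case: hon => hon.
  - exact: (disj ayx w1 vy vx vZ1 vw ny1 nyw nx1 nxw hE hon).
  - exact: (disj ayx w2' vy vx vw vZ2 nyw ny2 nxw nx2 hE hon).
have ef : forall x y, adj x y -> x \in Cs -> y \in Cs -> x <> y ->
    efact n (x \in S) (y \in S) (rk x) (rk y).
  move=> x y axy hxC hyC nxy; split; [|split].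
  - by move=> hx hy; exact: both.
  - by move=> hx hy; exact: (one x y).
  - by move=> hx hy; apply: (one y x) => //; rewrite adj_sym.
have claim : forall v, v \in S -> rk v = 0%N \/ rk v = n.-1.
  move=> v hv; have [k [i ev]] := Cs_cyc (inC v hv).
  set i1 := nxt i; set i2 := nxt i1; set i3 := nxt i2.
  have [d2 d3 d31] := nxt_dist i.
  have d1 := nxt_neq i.
  have d21 := nxt_neq i1. have d32 := nxt_neq i2.
  have ne : forall a b, a != b -> cyc k a <> cyc k b.
    by move=> a b nab /cyc_inj [_ e]; rewrite e eqxx in nab.
  have ri : forall a b, cyc k a \in S -> cyc k b \in S -> a != b -> rk (cyc k a) <> rk (cyc k b).
    by move=> a b ha hb nab e; apply: (ne a b nab); exact: (rank_inj hpos hcr ha hb e).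
  have lt : forall a, cyc k a \in S -> (rk (cyc k a) < n)%N by move=> a ha; exact: rank_lt.
  have e30 : nxt i3 = i by rewrite /i3 /i2 /i1 nxt4.
  subst v.
  have h5 : (5 <= n)%N by rewrite /n; lia.
  have d20 : i != i2 by rewrite eq_sym.
  have d30 : i != i3 by rewrite eq_sym.
  have d10 : i != i1 by rewrite eq_sym.
  have d31' : i1 != i3 by rewrite eq_sym.
  have d21' : i1 != i2 by rewrite eq_sym.
  have d32' : i2 != i3 by rewrite eq_sym.
  have L0 := lt i hv.
  have L1 : cyc k i1 \in S -> (rk (cyc k i1) < n)%N := @lt i1.
  have L2 : cyc k i2 \in S -> (rk (cyc k i2) < n)%N := @lt i2.
  have L3 : cyc k i3 \in S -> (rk (cyc k i3) < n)%N := @lt i3.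
  have D01 : cyc k i1 \in S -> rk (cyc k i) <> rk (cyc k i1) := fun h => ri _ _ hv h d10.
  have D02 : cyc k i2 \in S -> rk (cyc k i) <> rk (cyc k i2) := fun h => ri _ _ hv h d20.
  have D03 : cyc k i3 \in S -> rk (cyc k i) <> rk (cyc k i3) := fun h => ri _ _ hv h d30.
  have D12 : cyc k i1 \in S -> cyc k i2 \in S -> rk (cyc k i1) <> rk (cyc k i2) := fun h h' => ri _ _ h h' d21'.
  have D13 : cyc k i1 \in S -> cyc k i3 \in S -> rk (cyc k i1) <> rk (cyc k i3) := fun h h' => ri _ _ h h' d31'.
  have D23 : cyc k i2 \in S -> cyc k i3 \in S -> rk (cyc k i2) <> rk (cyc k i3) := fun h h' => ri _ _ h h' d32'.
  have E01 := ef _ _ (adj_cc k i) (mem_Cs k i) (mem_Cs k i1) (ne _ _ d10).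
  have E12 := ef _ _ (adj_cc k i1) (mem_Cs k i1) (mem_Cs k i2) (ne _ _ d21').
  have E23 := ef _ _ (adj_cc k i2) (mem_Cs k i2) (mem_Cs k i3) (ne _ _ d32').
  have a30 := adj_cc k i3; rewrite e30 in a30.
  have E30 := ef _ _ a30 (mem_Cs k i3) (mem_Cs k i) (ne _ _ (negbT (introF eqP (fun e => negP d30 (introT eqP (esym e)))))).
  rewrite hv in E01 E30.
  exact: (cyc_rank h5 L0 L1 L2 L3 D01 D02 D03 D12 D13 D23 E01 E12 E23 E30).
have s3 : (3 <= size S)%N by lia.
have [a [b [c [ha hb hc [nab nac nbc]]]]] := three_of uS s3.
have iab : rk a <> rk b by move=> e; apply: (negP nab); apply/eqP; exact: (rank_inj hpos hcr ha hb e).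
have iac : rk a <> rk c by move=> e; apply: (negP nac); apply/eqP; exact: (rank_inj hpos hcr ha hc e).
have ibc : rk b <> rk c by move=> e; apply: (negP nbc); apply/eqP; exact: (rank_inj hpos hcr hb hc e).
have := claim a ha; have := claim b hb; have := claim c hc; lia.
Qed.

End Frame.

End FrM.
Import FrM.

Module MainM.
Set Implicit Arguments. Unset Strict Implicit. Unset Printing Implicit Defensive.
Import Order.TTheory GRing.Theory Num.Theory.

Lemma exmin (I : finType) (i0 : I) (F : I -> nat) : exists i, forall j, F i <= F j.
Proof. by case: (@arg_minnP I i0 predT F isT) => i _ h; exists i => j; apply: h. Qed.
Lemma exmax (I : finType) (i0 : I) (F : I -> nat) : exists i, forall j, F j <= F i.
Proof. by case: (@arg_maxnP I i0 predT F isT) => i _ h; exists i => j; apply: h. Qed.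

Definition qx (x : 'I_4 * 'I_2) : V := qv x.1 x.2.
Definition cx (x : 'I_3 * 'I_4) : V := cyc x.1 x.2.

Lemma qx_inj : injective qx.
Proof. by move=> [i j] [i' j'] []  /= -> ->. Qed.

Lemma count_predU_le (T : Type) (a b c : pred T) (s : seq T) :
  (forall x, c x -> a x || b x) -> count c s <= count a s + count b s.
Proof.
move=> h; elim: s => [|x s IH] //=.
have := h x; case: (c x); case: (a x); case: (b x) => //= H; try (by have := H isT); lia.
Qed.


End MainM.
Import MainM.

Theorem lemma3 (R : realFieldType) (l : nat) (A : V -> nat * nat)
    (p : V -> R * R) :
  planar_geometric_storyplan l A p ->
  exists I' : seq (nat * nat),
    uniq I' /\ (6 <= size I')%N /\
    (forall iv, iv \in I' -> exists (i : 'I_4) (j : 'I_2), iv = A (qv i j)) /\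
    (forall iv, iv \in I' -> forall t, (iv.1 <= t <= iv.2)%N ->
       forall (k : 'I_3) (i : 'I_4), visible A (cyc k i) t).
Proof.
move=> [[Hint Hov] Hfr].
have frame : forall v t, visible A v t -> frame_planar A p t.
  move=> v t; rewrite /visible => /andP[h1 h2]; apply: Hfr.
  have [a [b c]] := Hint v; apply/andP; split; lia.
have ov : forall u v, adj u v -> (A u).1 <= (A v).2 /\ (A v).1 <= (A u).2.
  move=> u v /Hov [t [/andP[a b] /andP[c d]]]; split; lia.
have sle : forall v, (A v).1 <= (A v).2 by move=> v; have [_ [h _]] := Hint v.
have oqc : forall x k i, (A (qx x)).1 <= (A (cyc k i)).2 /\ (A (cyc k i)).1 <= (A (qx x)).2.
  by move=> x k i; apply: ov; exact: adj_qc.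
have st1 : exists x1 x2, (A (qx x1)).2 < (A (qx x2)).1.
  have [x1 h1] := exmin (ord0, ord0) (fun x => (A (qx x)).2).
  have [x2 h2] := exmax (ord0, ord0) (fun x => (A (qx x)).1).
  case: (ltnP (A (qx x1)).2 (A (qx x2)).1) => hlt; first by exists x1, x2.
  exfalso.
  set Sx := (A (qx x2)).1 in h2 hlt; set Lx := (A (qx x1)).2 in h1 hlt.
  have [i0 hi0] := exmin ord0 (fun i : 'I_4 => minn (A (cyc ord0 i)).2 Lx).
  set t := minn (A (cyc ord0 i0)).2 Lx in hi0.
  set i1 := nxt i0; set i3 := nxt (nxt (nxt i0)).
  have e30 : nxt i3 = i0 by rewrite /i3 nxt4.
  have cL : forall k i, (A (cyc k i)).1 <= Lx by move=> k i; have [_ ?] := oqc x1 k i.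
  have cS : forall k i, Sx <= (A (cyc k i)).2 by move=> k i; have [? _] := oqc x2 k i.
  have tS : Sx <= t by rewrite /t leq_min cS.
  have vq : forall x, visible A (qx x) t.
    move=> x; rewrite /visible; have := h1 x; have := h2 x; rewrite /= -/Sx -/Lx.
    have : t <= Lx by rewrite /t geq_minr.
    lia.
  have v0 : visible A (cyc ord0 i0) t.
    by rewrite /visible /t leq_min sle cL geq_minl.
  have v1 : visible A (cyc ord0 i1) t.
    rewrite /visible /t leq_min cL (proj2 (ov _ _ (adj_cc ord0 i0))) /=.
    by apply: leq_trans (hi0 i1) _; rewrite geq_minl.
  have v3 : visible A (cyc ord0 i3) t.
    have a30 := adj_cc ord0 i3; rewrite e30 in a30.
    rewrite /visible /t leq_min cL (proj1 (ov _ _ a30)) /=.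
    by apply: leq_trans (hi0 i3) _; rewrite geq_minl.
  have fr := frame _ _ v0.
  have [d2 d3 d31] := nxt_dist i0.
  have d1 := nxt_neq i0.
  have ne : forall a b, a != b -> cyc ord0 a <> cyc ord0 b.
    by move=> a b nab /cyc_inj [_ e]; rewrite e eqxx in nab.
  have n01 : cyc ord0 i0 <> cyc ord0 i1 by apply: ne; rewrite eq_sym.
  have n03 : cyc ord0 i0 <> cyc ord0 i3 by apply: ne; rewrite eq_sym.
  have n13 : cyc ord0 i1 <> cyc ord0 i3 by apply: ne; rewrite eq_sym.
  set T := [seq qx x | x <- enum {: 'I_4 * 'I_2}].
  have uT : uniq T by rewrite map_inj_uniq ?enum_uniq //; exact: qx_inj.
  have sT : 7 <= size T by rewrite size_map -cardE card_prod !card_ord.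
  have hT : forall v, v \in T -> [/\ visible A v t, adj (cyc ord0 i0) v, adj (cyc ord0 i1) v,
       adj (cyc ord0 i3) v & [/\ v <> cyc ord0 i0, v <> cyc ord0 i1 & v <> cyc ord0 i3]].
    move=> v /mapP [x _ ->]; split; [exact: vq | exact: adj_cq | exact: adj_cq | exact: adj_cq |].
    by case: x.
  exact: (noK3 fr n01 n03 n13 v0 v1 v3 uT sT hT).
have [x1 [x2 hx12]] := st1.
have [cM hM] := exmax (ord0, ord0) (fun x => (A (cx x)).1).
have [cm hm] := exmin (ord0, ord0) (fun x => (A (cx x)).2).
set M1 := (A (cx cM)).1 in hM; set M2 := (A (cx cm)).2 in hm.
have cM1 : forall k i, (A (cyc k i)).1 <= M1 by move=> k i; exact: (hM (k, i)).
have cM2 : forall k i, M2 <= (A (cyc k i)).2 by move=> k i; exact: (hm (k, i)).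
have M12 : M1 <= M2.
  have [_ a] := oqc x1 cM.1 cM.2; have [b _] := oqc x2 cm.1 cm.2.
  exact: (leq_trans a (leq_trans (ltnW hx12) b)).
have allvis : forall t, M1 <= t <= M2 -> forall k i, visible A (cyc k i) t.
  move=> t /andP[a b] k i; rewrite /visible; have := cM1 k i; have := cM2 k i; lia.
have bad2 : forall x y t, x != y -> M1 <= t <= M2 -> visible A (qx x) t -> visible A (qx y) t -> False.
  move=> x y t nxy ht vx vy.
  apply: (noOct (frame _ _ vx) (q := qx x) (q' := qx y)) => //.
  - by move=> e; apply: (negP nxy); apply/eqP; exact: qx_inj.
  - move=> k i; split; [exact: allvis | exact: adj_qc | exact: adj_qc | by case: x {nxy vx} | by case: y {nxy vy}].
have qM1 : forall x, M1 <= (A (qx x)).2 by move=> x; have [_ ?] := oqc x cM.1 cM.2.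
have qM2 : forall x, (A (qx x)).1 <= M2 by move=> x; have [? _] := oqc x cm.1 cm.2.
set good := fun x : 'I_4 * 'I_2 => (M1 <= (A (qx x)).1) && ((A (qx x)).2 <= M2).
set xs := enum {: 'I_4 * 'I_2}.
have uxs : uniq xs by exact: enum_uniq.
have sxs : size xs = 8 by rewrite /xs -cardE card_prod !card_ord.
have cl : count (fun x => (A (qx x)).1 < M1) xs <= 1.
  rewrite leqNgt; apply/negP => /(two_of uxs) [a [b [_ _ nab ha hb]]].
  apply: (bad2 a b M1 nab); first by rewrite leqnn M12.
  - by rewrite /visible qM1 andbT ltnW.
  - by rewrite /visible qM1 andbT ltnW.
have cr : count (fun x => M2 < (A (qx x)).2) xs <= 1.
  rewrite leqNgt; apply/negP => /(two_of uxs) [a [b [_ _ nab ha hb]]].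
  apply: (bad2 a b M2 nab); first by rewrite leqnn M12.
  - by rewrite /visible qM2 ltnW.
  - by rewrite /visible qM2 ltnW.
have cg : 6 <= count good xs.
  have := count_predC good xs; rewrite sxs.
  have := @count_predU_le _ (fun x => (A (qx x)).1 < M1) (fun x => M2 < (A (qx x)).2) (predC good) xs.
  have H : forall x, predC good x -> ((A (qx x)).1 < M1) || (M2 < (A (qx x)).2).
    by move=> x; rewrite /= /good negb_and -!ltnNge.
  move=> /(_ H); lia.
exists [seq A (qx x) | x <- filter good xs]; split; [|split; [|split]].
- have ug : uniq (filter good xs) := filter_uniq good uxs.
  rewrite map_inj_in_uniq // => x y.
  rewrite !mem_filter => /andP[gx _] /andP[gy _] exy.
  apply/eqP; apply: contraT => nxy; exfalso.
  move: gx gy; rewrite /good => /andP[a b] /andP[c d].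
  apply: (bad2 x y (A (qx x)).1 nxy).
  - by rewrite a /=; apply: leq_trans (sle _) b.
  - by rewrite /visible leqnn sle.
  - by rewrite /visible exy leqnn sle.
- by rewrite size_map size_filter.
- by move=> iv /mapP [x _ ->]; exists x.1, x.2.
- move=> iv /mapP [x]; rewrite mem_filter => /andP[/andP[a b] _] -> t /andP[c d] k i.
  by apply: allvis; apply/andP; split; [apply: leq_trans c | apply: leq_trans b].
Qed.
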